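(* Let $n\ge 0$, let $A\in\mathcal{PM}(n)$ and let $v\in\{0,1\}^n$ be a row vector. Then $v$ is a poset vector of $A$ if and only if $\mathrm{supp}(v)$ is an order ideal of $P_A$. Moreover, the map $v\mapsto \mathrm{supp}(v)$ is a bijection between the set of poset vectors of $A$ (equivalently, the set of $v$-extensions $A^v$ of $A$) and the set of order ideals of $P_A$.
   Context: Let $X_n=\{0,1,\ldots,n-1\}$. A naturally labeled (NL) poset on $X_n$ is a partial order $\preceq$ on $X_n$ such that $x\preceq y$ implies $x\le y$ in the usual integer order. Its poset matrix is the $n\times n$ $(0,1)$-matrix $A=(a_{i,j})_{i,j\in X_n}$ (indices starting from $0$) with $a_{i,j}=1$ if $j\preceq i$ and $a_{i,j}=0$ otherwise. $\mathcal{PM}(n)$ denotes the set of poset matrices of NL posets on $X_n$, and for $A\in\mathcal{PM}(n)$, $P_A$ is the unique NL poset on $X_n$ whose poset matrix is $A$. For a row vector $v\in\{0,1\}^n$, the $v$-extension of $A$ is the $(n+1)\times(n+1)$ matrix $A^v=\begin{bmatrix}A&\mathbf{0}\\ v&1\end{bmatrix}$, and $v$ is called a poset vector of $A$ if $A^v\in\mathcal{PM}(n+1)$. $\mathrm{supp}(v)=\{j\in X_n: v_j=1\}$. An order ideal of a poset is a downward closed subset (the empty set included). *)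

(* Defs.v *)
From mathcomp Require Import all_boot all_algebra.
Set Implicit Arguments. Unset Strict Implicit. Unset Printing Implicit Defensive.

(* (0,1)-matrices are represented as boolean matrices 'M[bool]_n;
   entry true = 1, false = 0. X_n = 'I_n. *)

Definition NL_poset (n : nat) (le : rel 'I_n) : Prop :=
  [/\ reflexive le, antisymmetric le, transitive le &
      forall x y : 'I_n, le x y -> (x <= y)%N].

Definition poset_matrix (n : nat) (le : rel 'I_n) : 'M[bool]_n :=
  \matrix_(i < n, j < n) le j i.

Definition PM (n : nat) (A : 'M[bool]_n) : Prop :=
  exists le : rel 'I_n, NL_poset le /\ A = poset_matrix le.

Definition P_of (n : nat) (A : 'M[bool]_n) : rel 'I_n := fun x y => A y x.

Definition vext (n : nat) (A : 'M[bool]_n) (v : 'rV[bool]_n) : 'M[bool]_n.+1 :=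
  castmx (addn1 n, addn1 n)
    (block_mx A (const_mx false : 'cV[bool]_n) v (const_mx true : 'M[bool]_1)).

Definition poset_vector (n : nat) (A : 'M[bool]_n) (v : 'rV[bool]_n) : Prop :=
  PM (vext A v).

Definition supp (n : nat) (v : 'rV[bool]_n) : {set 'I_n} := [set j | v ord0 j].

Definition order_ideal (n : nat) (le : rel 'I_n) (I : {set 'I_n}) : Prop :=
  forall x y : 'I_n, le y x -> x \in I -> y \in I.

(* Main.v *)
Require Import Defs.
From mathcomp Require Import all_boot all_algebra.
Set Implicit Arguments. Unset Strict Implicit.
Section S.
Variables (n : nat) (A : 'M[bool]_n) (v : 'rV[bool]_n).
Let L (i : 'I_n) : 'I_n.+1 := lift ord_max i.

Lemma cL (i : 'I_n) : cast_ord (esym (addn1 n)) (L i) = lshift 1 i.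
Proof. apply: val_inj => /=. by rewrite /bump leqNgt ltn_ord. Qed.
Lemma cM : cast_ord (esym (addn1 n)) ord_max = rshift n (ord0 : 'I_1).
Proof. apply: val_inj => /=; by rewrite addn0. Qed.

Lemma vLL i j : vext A v (L i) (L j) = A i j.
Proof. by rewrite /vext castmxE /= cL cL block_mxEul. Qed.
Lemma vLM i : vext A v (L i) ord_max = false.
Proof. by rewrite /vext castmxE /= cL cM block_mxEur mxE. Qed.
Lemma vML j : vext A v ord_max (L j) = v ord0 j.
Proof. by rewrite /vext castmxE /= cL cM block_mxEdl. Qed.
Lemma vMM : vext A v ord_max ord_max = true.
Proof. by rewrite /vext castmxE /= cM block_mxEdr mxE. Qed.
End S.

Lemma liftM n (i : 'I_n) : (lift ord_max i : nat) = i.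
Proof. by rewrite /= /bump leqNgt ltn_ord. Qed.

Lemma splitI n (P : 'I_n.+1 -> Prop) : P ord_max -> (forall i, P (lift ord_max i)) -> forall x, P x.
Proof. move=> H1 H2 x; by case: (unliftP ord_max x) => [x'|] ->. Qed.

Lemma PA n (A : 'M[bool]_n) : PM A -> NL_poset (P_of A).
Proof.
case=> le [[rf an tr nl] ->].
have e : forall x y, P_of (poset_matrix le) x y = le x y by move=> x y; rewrite /P_of mxE.
split.
- by move=> x; rewrite e.
- by move=> x y; rewrite !e; apply: an.
- by move=> x y z; rewrite !e; apply: tr.
- by move=> x y; rewrite e; apply: nl.
Qed.

Lemma pv_ideal n (A : 'M[bool]_n) v : poset_vector A v -> order_ideal (P_of A) (supp v).
Proof.
case=> le [[_ _ tr _] E] x y; rewrite /P_of !inE => Hyx Hx.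
have e : forall i j, vext A v i j = le j i by move=> i j; rewrite E mxE.
rewrite -(vML A v) e; apply: (tr (lift ord_max x)).
  by rewrite -e vLL.
by rewrite -e vML.
Qed.

Lemma ideal_pv n (A : 'M[bool]_n) v : PM A -> order_ideal (P_of A) (supp v) -> poset_vector A v.
Proof.
move=> /PA [rf an tr nl] Hid.
exists (fun x y => vext A v y x); split; last first.
  by apply/matrixP => i j; rewrite mxE.
split.
- apply: splitI; first by rewrite vMM.
  by move=> i; rewrite vLL; apply: rf.
- apply: splitI.
    apply: splitI => //= i; by rewrite vLM vML.
  move=> i; apply: splitI; first by rewrite vLM vML andbF.
  move=> j; rewrite !vLL => H; congr lift; exact: an.
- apply: splitI.
    apply: splitI; first by [].
    move=> i; apply: splitI; first by [].
    by move=> j _; rewrite vLM.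
  move=> k; apply: splitI.
    by move=> x; rewrite vLM.
  move=> i; apply: splitI.
    rewrite vLL !vML => H1 H2.
    by have := Hid k i; rewrite !inE; apply.
  by move=> j; rewrite !vLL => H1 H2; exact: (tr k i j H1 H2).
- apply: splitI.
    apply: splitI; first by []. by move=> i; rewrite vLM.
  move=> i; apply: splitI.
    by move=> _; exact: (leq_ord (lift ord_max i)).
  move=> j; rewrite vLL => H; have := nl _ _ H; by rewrite !liftM.
Qed.

Theorem theorem2p1 (n : nat) (A : 'M[bool]_n) :
  PM A ->
  (forall v : 'rV[bool]_n, poset_vector A v <-> order_ideal (P_of A) (supp v)) /\
  (* v |-> supp v is a bijection from poset vectors onto order ideals *)
  (forall v w : 'rV[bool]_n, poset_vector A v -> poset_vector A w ->
      supp v = supp w -> v = w) /\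
  (forall I : {set 'I_n}, order_ideal (P_of A) I ->
      exists2 v : 'rV[bool]_n, poset_vector A v & supp v = I) /\
  (* poset vectors correspond bijectively to v-extensions *)
  (forall v w : 'rV[bool]_n, poset_vector A v -> poset_vector A w ->
      vext A v = vext A w -> v = w).
Proof.
move=> HA; split; first by move=> v; split; [apply: pv_ideal | apply: ideal_pv].
split.
  move=> v w _ _ H; apply/matrixP => i j; rewrite (ord1 i).
  by have := congr1 (fun S : {set 'I_n} => j \in S) H; rewrite /supp !inE => ->.
split.
  move=> I HI.
  have Hs : supp (\row_j (j \in I))%R = I by apply/setP => j; rewrite inE mxE.
  exists (\row_j (j \in I))%R => //; apply: ideal_pv => //; by rewrite Hs.
move=> v w _ _ H; apply/matrixP => i j; rewrite (ord1 i).
by rewrite -(vML A v) -(vML A w) H.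
Qed.
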